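(* Let $(\mathcal J^n)_{n\in\mathbb N}$ be a sequence of closed convex subsets of $\mathbb R^d$ with set limit $\mathcal J=\operatorname{Lim}_{n\to\infty}\mathcal J^n$, and let $Q$ be a $d\times d$ matrix such that $\ker(Q)\subseteq\mathcal J^n$ for all $n\in\mathbb N$ and $\ker(Q)\subseteq\mathcal J$. Then $Q\mathcal J=\operatorname{Lim}_{n\to\infty}Q\mathcal J^n$.
   Context: For subsets $\mathcal J^n\subseteq\mathbb R^d$: the upper limit is $\operatorname{Limsup}_n\mathcal J^n:=\{x\in\mathbb R^d:\liminf_{n\to\infty}\mathrm{dist}(x,\mathcal J^n)=0\}$ (the cluster points of sequences $x_n\in\mathcal J^n$), the lower limit is $\operatorname{Liminf}_n\mathcal J^n:=\{x:\lim_{n\to\infty}\mathrm{dist}(x,\mathcal J^n)=0\}$ (limits of sequences $x_n\in\mathcal J^n$), and $\mathcal J$ is the set limit, $\mathcal J=\operatorname{Lim}_n\mathcal J^n$, if $\mathcal J=\operatorname{Limsup}_n\mathcal J^n=\operatorname{Liminf}_n\mathcal J^n$. For a set $\mathcal S$, $Q\mathcal S:=\{Qs:s\in\mathcal S\}$. *)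

(* Defs.v *)
From HB Require Import structures.
From mathcomp Require Import all_boot all_order all_algebra.
From mathcomp Require Import all_classical all_reals all_analysis.
Set Implicit Arguments. Unset Strict Implicit. Unset Printing Implicit Defensive.
Import Order.TTheory GRing.Theory Num.Theory.
Import numFieldNormedType.Exports.
Local Open Scope classical_set_scope.
Local Open Scope ring_scope.

Definition enorm {R : realType} {d : nat} (v : 'cV[R]_d) : R :=
  Num.sqrt (\sum_(i < d) v i 0 ^+ 2).

(* x \in Limsup_n J n  <->  liminf_n dist(x, J n) = 0, written out:
   for every eps > 0, infinitely many n have a point of J n within eps of x. *)
Definition set_limsup {R : realType} {d : nat} (J : nat -> set 'cV[R]_d) : set 'cV[R]_d :=
  [set x | forall eps : R, 0 < eps -> forall N : nat, exists2 n : nat, (N <= n)%N &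
           exists2 y, J n y & enorm (x - y) < eps].

(* x \in Liminf_n J n  <->  lim_n dist(x, J n) = 0, written out:
   for every eps > 0, eventually J n has a point within eps of x. *)
Definition set_liminf {R : realType} {d : nat} (J : nat -> set 'cV[R]_d) : set 'cV[R]_d :=
  [set x | forall eps : R, 0 < eps -> exists N : nat, forall n : nat, (N <= n)%N ->
           exists2 y, J n y & enorm (x - y) < eps].

Definition is_set_limit {R : realType} {d : nat} (J : nat -> set 'cV[R]_d) (L : set 'cV[R]_d) : Prop :=
  L = set_limsup J /\ L = set_liminf J.

Definition mx_image {R : realType} {d : nat} (Q : 'M[R]_d) (S : set 'cV[R]_d) : set 'cV[R]_d :=
  (fun s => Q *m s) @` S.

Definition mx_kernel {R : realType} {d : nat} (Q : 'M[R]_d) : set 'cV[R]_d :=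
  [set x | Q *m x = 0].

Definition convex_subset {R : realType} {d : nat} (S : set 'cV[R]_d) : Prop :=
  @convex_set R 'cV[R]_d S.

(* Main.v *)
Require Import Defs.
From HB Require Import structures.
From mathcomp Require Import all_boot all_order all_algebra.
From mathcomp Require Import all_classical all_reals all_analysis.
Import Order.TTheory GRing.Theory Num.Theory.
Import numFieldNormedType.Exports.
Local Open Scope classical_set_scope.
Local Open Scope ring_scope.

Definition N1 {R : realType} {d : nat} (v : 'cV[R]_d) : R := \sum_(i < d) `|v i 0|.
Definition mn {R : realType} {d : nat} (M : 'M[R]_d) : R := \sum_(i < d) \sum_(j < d) `|M i j|.

Lemma N1_ge0 (R : realType) d (v : 'cV[R]_d) : 0 <= N1 v.
Proof. by apply: sumr_ge0 => i _. Qed.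

Lemma mn_ge0 (R : realType) d (M : 'M[R]_d) : 0 <= mn M.
Proof. by apply: sumr_ge0 => i _; apply: sumr_ge0. Qed.

Lemma coord_le_N1 (R : realType) d (v : 'cV[R]_d) i : `|v i 0| <= N1 v.
Proof.
rewrite /N1 (bigD1 i) //= lerDl; by apply: sumr_ge0.
Qed.

Lemma coord_le_enorm (R : realType) d (v : 'cV[R]_d) i : `|v i 0| <= enorm v.
Proof.
rewrite /enorm -sqrtr_sqr ler_wsqrtr // (bigD1 i) //= lerDl.
by apply: sumr_ge0 => j _; apply: sqr_ge0.
Qed.

Lemma enorm_le_N1 (R : realType) d (v : 'cV[R]_d) : enorm v <= N1 v.
Proof.
rewrite /enorm -[N1 v]ger0_norm ?N1_ge0 // -sqrtr_sqr ler_wsqrtr //.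
rewrite expr2 {2}/N1 mulr_sumr; apply: ler_sum => i _.
rewrite -real_normK ?num_real // expr2 mulrC.
by apply: ler_wpM2r => //; apply: coord_le_N1.
Qed.

Lemma N1_le_enorm (R : realType) d (v : 'cV[R]_d) : N1 v <= d%:R * enorm v.
Proof.
have -> : d%:R * enorm v = \sum_(i < d) enorm v by rewrite sumr_const card_ord mulr_natl.
rewrite /N1; apply: ler_sum => i _.
exact: coord_le_enorm.
Qed.

Lemma N1D (R : realType) d (u v : 'cV[R]_d) : N1 (u + v) <= N1 u + N1 v.
Proof.
rewrite /N1 -big_split; apply: ler_sum => i _; rewrite mxE; exact: ler_normD.
Qed.

Lemma N1_mul (R : realType) d (M : 'M[R]_d) (v : 'cV[R]_d) : N1 (M *m v) <= mn M * N1 v.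
Proof.
rewrite /N1 /mn mulr_suml; apply: ler_sum => i _; rewrite mxE mulr_suml.
apply: le_trans (ler_norm_sum _ _ _) _; apply: ler_sum => j _.
rewrite normrM; apply: ler_wpM2l => //; exact: coord_le_N1.
Qed.

Definition K {R : realType} {d : nat} (M : 'M[R]_d) : R := mn M * d%:R.

Lemma K_ge0 (R : realType) d (M : 'M[R]_d) : 0 <= K M.
Proof. by rewrite /K mulr_ge0 ?mn_ge0. Qed.

Lemma enorm_mul (R : realType) d (M : 'M[R]_d) (v : 'cV[R]_d) : enorm (M *m v) <= K M * enorm v.
Proof.
apply: (le_trans (enorm_le_N1 _ _ _)); apply: (le_trans (N1_mul _ _ _ _)).
rewrite /K -mulrA; apply: ler_wpM2l; [exact: mn_ge0 | exact: N1_le_enorm].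
Qed.
Lemma add_ker (R : realType) (d : nat) (C : set 'cV[R]_d) (Q : 'M[R]_d) :
  closed C -> convex_subset C -> mx_kernel Q `<=` C ->
  forall c k, C c -> mx_kernel Q k -> C (c + k).
Proof.
move=> cC vC kC c k Cc Kk.
pose t (n : nat) : R := n.+1%:R^-1.
have t0 n : 0 < t n by rewrite /t invr_gt0 ltr0n.
have t1 n : t n <= 1 by rewrite /t invf_le1 ?ltr0n // ler1n.
apply: (@closed_cvg nat _ \oo _ (fun n => k + (1 - t n) *: c) C cC).
  apply: nearW => n.
  have := vC ((t n)^-1 *: k) c (Itv01 (ltW (t0 n)) (t1 n)).
  rewrite !inE => H.
  have {}H := H _ Cc.
  have : C ((t n)^-1 *: k).
    apply: kC; move: Kk; rewrite /mx_kernel /= => Kk; by rewrite -scalemxAr Kk scaler0.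
  move/H.
  suff -> : k + (1 - t n) *: c = (t n) *: ((t n)^-1 *: k) + (1 - t n) *: c by [].
  by rewrite scalerA divff ?scale1r // gt_eqF.
rewrite addrC; apply: cvgD; first exact: cvg_cst.
rewrite -[X in _ --> X](scale1r c); apply: cvgZ; last exact: cvg_cst.
rewrite -[X in _ --> X]subr0; apply: cvgB; first exact: cvg_cst.
exact: cvg_harmonic.
Qed.

From mathcomp Require Import lra.

Lemma small_bound (R : realType) (C x y eps : R) : 0 <= C -> 0 < eps ->
  x <= C * y -> y < eps / (C + 1) -> x < eps.
Proof.
move=> C0 e0 h hy.
have C1 : 0 < C + 1 by lra.
have h2 : C * y <= C * (eps / (C + 1)) by apply: ler_wpM2l => //; apply: ltW.
have h3 : C * (eps / (C + 1)) < eps.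
  rewrite mulrA ltr_pdivrMr //; nra.
lra.
Qed.

Lemma epos (R : realType) (C eps : R) : 0 <= C -> 0 < eps -> 0 < eps / (C + 1).
Proof. move=> C0 e0; apply: divr_gt0 => //; lra. Qed.

Lemma N1N (R : realType) d (v : 'cV[R]_d) : N1 (- v) = N1 v.
Proof. by apply: eq_bigr => i _; rewrite mxE normrN. Qed.

Theorem propositionC3 (R : realType) (d : nat) (J : nat -> set 'cV[R]_d)
  (L : set 'cV[R]_d) (Q : 'M[R]_d) :
  (forall n, closed (J n)) ->
  (forall n, convex_subset (J n)) ->
  is_set_limit J L ->
  (forall n, mx_kernel Q `<=` J n) ->
  mx_kernel Q `<=` L ->
  is_set_limit (fun n => mx_image Q (J n)) (mx_image Q L).
Proof.
move=> cJ vJ [EL1 EL2] kJ kL.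
pose P := pinvmx Q.
have QPQ : Q *m P *m Q = Q by apply: mulmxKpV; apply: submx_refl.
have QPQy : forall v : 'cV[R]_d, Q *m (P *m (Q *m v)) = Q *m v by move=> v; rewrite -[in RHS]QPQ !mulmxA.
have i1 : mx_image Q L `<=` set_liminf (fun n => mx_image Q (J n)).
  move=> _ [s Ls <-] eps e0.
  rewrite EL2 in Ls.
  have [N HN] := Ls _ (epos _ _ _ (K_ge0 _ _ Q) e0).
  exists N => n hn; have [y Jy hy] := HN n hn.
  exists (Q *m y); first by exists y.
  rewrite -mulmxBr; apply: small_bound (K_ge0 _ _ Q) e0 _ hy.
  exact: enorm_mul.
have i2 : set_liminf (fun n => mx_image Q (J n)) `<=` set_limsup (fun n => mx_image Q (J n)).
  move=> z hz eps e0 N; have [N0 HN] := hz eps e0.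
  exists (maxn N N0); first by rewrite leq_maxl.
  by apply: HN; rewrite leq_maxr.
have i3 : set_limsup (fun n => mx_image Q (J n)) `<=` mx_image Q L.
  move=> z hz; exists (P *m z).
    rewrite EL1 => eps e0 N.
    have [n hn [_ [y Jy <-] hy]] := hz _ (epos _ _ _ (K_ge0 _ _ P) e0) N.
    exists n => //; exists (P *m (Q *m y)).
      have -> : P *m (Q *m y) = y + (P *m (Q *m y) - y) by rewrite addrC subrK.
      apply: (add_ker _ _ _ Q (cJ n) (vJ n) (kJ n)) => //.
      by rewrite /mx_kernel /= mulmxBr QPQy subrr.
    rewrite -mulmxBr; apply: small_bound (K_ge0 _ _ P) e0 _ hy.
    exact: enorm_mul.
  pose a := z - Q *m (P *m z).
  pose C := (1 + mn (Q *m P)) * d%:R.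
  have C0 : 0 <= C by rewrite /C mulr_ge0 // addr_ge0 // mn_ge0.
  have small : forall eps, 0 < eps -> N1 a < eps.
    move=> eps e0.
    have [n hn [_ [y Jy <-] hy]] := hz _ (epos _ _ _ C0 e0) 0%N.
    apply: small_bound C0 e0 _ hy.
    set b := z - Q *m y.
    have -> : a = b - (Q *m P) *m b.
      by rewrite -mulmxA /a /b !mulmxBr QPQy opprB addrA subrK.
    apply: (le_trans (N1D _ _ _ _)); rewrite N1N.
    apply: (@le_trans _ _ ((1 + mn (Q *m P)) * N1 b)).
      by rewrite mulrDl mul1r lerD2l N1_mul.
    rewrite /C -mulrA; apply: ler_wpM2l; last exact: N1_le_enorm.
    by rewrite addr_ge0 // mn_ge0.
  have a0 : N1 a <= 0.
    rewrite leNgt; apply/negP => h; have := small _ h; by rewrite ltxx.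
  apply/eqP; rewrite eq_sym -subr_eq0; apply/eqP/matrixP => i j.
  rewrite (ord1 j) [RHS]mxE; apply/normr0_eq0/le_anti.
  by rewrite normr_ge0 andbT (le_trans (coord_le_N1 _ _ a i)).
split; apply/seteqP; split.
- by move=> x /i1 /i2.
- exact: i3.
- exact: i1.
- by move=> x /i2 /i3.
Qed.
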